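(* For any $A\subset\Omega$, if $\phi\in F_A$ then $\phi_\pi\in F_A$.
   Context: Let $\mathcal H$ be a complex Hilbert space. A projection is a bounded self-adjoint idempotent operator; $\wedge_\alpha p_\alpha$ is the projection onto the intersection of ranges. Let $S$ be a set; for each $t\in S$ let $\Gamma(t)$ be a countable set and for $a\in\Gamma(t)$ let $p^t_a$ be a projection on $\mathcal H$ with $\sum_{a\in\Gamma(t)}p^t_a=I$ (strong convergence). Let $\pi=\{p^t_a\}$ and $p^{t_1,\dots,t_k}_{a_1,\dots,a_k}=\wedge_{i=1}^kp^{t_i}_{a_i}$. $\pi$ commutes on $\phi$ if $W\phi=V\phi$ whenever $W,V$ are finite products of elements of $\pi$ with the same factors (with multiplicity) in possibly different orders; $\mathcal H_\pi$ is the closed subspace of such $\phi$, $p_\pi$ its projection, $\phi_\pi=p_\pi\phi$. Let $\Omega=\prod_{t\in S}\Gamma(t)$. For $A\subset\Omega$, $F_A=\{\phi\in\mathcal H:$ for every $\omega\in A$ there are $t_1,\dots,t_k\in S$ with $p^{t_1,\dots,t_k}_{\omega_{t_1},\dots,\omega_{t_k}}\phi=0\}$. *)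

(* Defs.v *)
From Stdlib Require Import List Permutation ClassicalEpsilon.
From mathcomp Require Import all_boot all_order all_algebra.
From mathcomp Require Import reals complex.
Set Implicit Arguments. Unset Strict Implicit. Unset Printing Implicit Defensive.
Import Order.TTheory GRing.Theory Num.Theory.
Local Open Scope ring_scope.

Section Hilbert.
Variable R : realType.
Local Notation C := (R[i]).
Variable V : lmodType C.
Variable ip : V -> V -> C.  (* inner product, linear in the first argument *)

(* norm induced by the inner product (a nonnegative real, viewed in C) *)
Definition hnorm (x : V) : C := sqrtC (ip x x).

Definition cauchy_seq (u : nat -> V) : Prop :=
  forall eps : C, 0 < eps -> exists N : nat,
    forall m n : nat, (N <= m)%N -> (N <= n)%N -> hnorm (u m - u n) < eps.

Definition converges_to (u : nat -> V) (l : V) : Prop :=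
  forall eps : C, 0 < eps -> exists N : nat,
    forall n : nat, (N <= n)%N -> hnorm (u n - l) < eps.

Definition is_hilbert : Prop :=
  [/\ (forall x y, ip y x = (ip x y)^*),
      (forall (a : C) x y z, ip (a *: x + y) z = a * ip x z + ip y z),
      (forall x, 0 <= ip x x),
      (forall x, ip x x = 0 -> x = 0) &
      (forall u, cauchy_seq u -> exists l, converges_to u l)].

Definition linear_op (T : V -> V) : Prop :=
  forall (a : C) x y, T (a *: x + y) = a *: T x + T y.

Definition bounded_op (T : V -> V) : Prop :=
  linear_op T /\ exists M : C, forall x, hnorm (T x) <= M * hnorm x.

Definition is_projection (P : V -> V) : Prop :=
  [/\ bounded_op P, (forall x y, ip (P x) y = ip x (P y)) & (forall x, P (P x) = P x)].

Definition orthproj (M : V -> Prop) (phi : V) : V :=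
  epsilon (inhabits 0)
    (fun psi => M psi /\ forall chi, M chi -> ip (phi - psi) chi = 0).

Definition range (T : V -> V) : V -> Prop := fun y => exists x, T x = y.

Definition meetproj (ps : list (V -> V)) : V -> V :=
  orthproj (fun y => forall q, In q ps -> range q y).

Definition lsum (l : list V) : V := fold_right (fun a b => a + b) 0 l.

Variable S : Type.
Variable Gamma : S -> Type.
Variable p : forall t : S, Gamma t -> V -> V.

Definition countable_type (X : Type) : Prop := exists f : X -> nat, injective f.

(* sum_{a in Gamma t} p^t_a = I, strong (unconditional) convergence *)
Definition sums_to_identity (t : S) : Prop :=
  forall (phi : V) (eps : C), 0 < eps -> exists l0 : list (Gamma t),
    forall l : list (Gamma t), NoDup l -> incl l0 l ->
      hnorm (phi - lsum (map (fun a => p a phi) l)) < eps.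

Definition word_prod (w : list {t : S & Gamma t}) : V -> V :=
  fold_right (fun i f => fun x => p (projT2 i) (f x)) (fun x => x) w.

Definition commutes_on (phi : V) : Prop :=
  forall w v : list {t : S & Gamma t}, Permutation w v ->
    word_prod w phi = word_prod v phi.

Definition H_pi : V -> Prop := commutes_on.

Definition phi_pi (phi : V) : V := orthproj H_pi phi.

Definition Omega := forall t : S, Gamma t.

Definition F_set (A : Omega -> Prop) : V -> Prop := fun phi =>
  forall omega : Omega, A omega ->
    exists ts : list S, ts <> nil /\
      meetproj (map (fun t => p (omega t)) ts) phi = 0.

End Hilbert.

(* Main.v *)
Require Import Defs.
From Stdlib Require Import List Permutation ClassicalEpsilon.
From mathcomp Require Import all_boot all_order all_algebra.
From mathcomp Require Import reals complex boolp classical_sets.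
From mathcomp Require Import lra.
Import Order.TTheory GRing.Theory Num.Theory.
Local Open Scope ring_scope.

Definition delta {R : realType} (n : nat) : R := (n.+1%:R)^-1.

Lemma delta_gt0 (R : realType) n : 0 < (delta n : R).
Proof. by rewrite /delta invr_gt0 ltr0Sn. Qed.

Lemma delta_le (R : realType) m n : (m <= n)%N -> (delta n : R) <= delta m.
Proof. by move=> h; rewrite /delta lef_pV2 ?posrE ?ltr0Sn // ler_nat ltnS. Qed.

Lemma delta_small (R : realType) (e : R) : 0 < e -> exists N, (delta N : R) < e.
Proof.
move=> e0; exists (Num.truncn e^-1).
rewrite /delta; set N := Num.truncn e^-1.
rewrite -[e]invrK ltf_pV2 ?posrE ?invr_gt0 ?ltr0Sn //.
exact: truncnS_gt.
Qed.

Section Basics.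
Variable R : realType.
Local Notation C := (R[i]).
Local Notation toC := (real_complex R).
Variable V : lmodType C.
Variable ip : V -> V -> C.
Hypothesis ipC : forall x y, ip y x = (ip x y)^*.
Hypothesis ipL : forall (a : C) x y z, ip (a *: x + y) z = a * ip x z + ip y z.
Hypothesis ip_ge0 : forall x, 0 <= ip x x.
Hypothesis ip_eq0 : forall x, ip x x = 0 -> x = 0.

Definition nr (x : V) : R := complex.Re (ip x x).

Lemma ReD (a b : C) : complex.Re (a + b) = complex.Re a + complex.Re b.
Proof. by case: a => ? ?; case: b. Qed.
Lemma ReN (a : C) : complex.Re (- a) = - complex.Re a.
Proof. by case: a. Qed.
Lemma ReM_real (r : R) (z : C) : complex.Re (toC r * z) = r * complex.Re z.
Proof. by case: z => a b /=; rewrite mul0r subr0. Qed.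
Lemma Re_toC (r : R) : complex.Re (toC r) = r.
Proof. by []. Qed.
Lemma ReJ' (z : C) : complex.Re (z^*) = complex.Re z.
Proof. by case: z. Qed.
Lemma conj_toC (r : R) : (toC r)^* = toC r.
Proof. exact: conjc_real. Qed.

Lemma ipxx x : ip x x = toC (nr x).
Proof.
rewrite /nr; have := ger0_Im (ip_ge0 x).
by case: (ip x x) => a b /= ->.
Qed.

Lemma nr_ge0 x : 0 <= nr x.
Proof. by rewrite -ler0c -ipxx. Qed.

Lemma ip0l z : ip 0 z = 0.
Proof.
have h := ipL 1 0 0 z; rewrite scale1r addr0 mul1r in h.
by apply: (addrI (ip 0 z)); rewrite addr0 -h.
Qed.
Lemma ipDl x y z : ip (x + y) z = ip x z + ip y z.
Proof. by have := ipL 1 x y z; rewrite scale1r mul1r. Qed.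
Lemma ipZl a x z : ip (a *: x) z = a * ip x z.
Proof. by have := ipL a x 0 z; rewrite addr0 ip0l addr0. Qed.
Lemma ipNl x z : ip (- x) z = - ip x z.
Proof. by rewrite -scaleN1r ipZl mulN1r. Qed.
Lemma ipBl x y z : ip (x - y) z = ip x z - ip y z.
Proof. by rewrite ipDl ipNl. Qed.
Lemma ipDr x y z : ip z (x + y) = ip z x + ip z y.
Proof. by rewrite [LHS]ipC ipDl rmorphD (ipC x z) (ipC y z). Qed.
Lemma ipZr a x z : ip z (a *: x) = a^* * ip z x.
Proof. by rewrite [LHS]ipC ipZl rmorphM (ipC x z). Qed.
Lemma ip0r z : ip z 0 = 0.
Proof. by rewrite ipC ip0l rmorph0. Qed.
Lemma ipNr x z : ip z (- x) = - ip z x.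
Proof. by rewrite [LHS]ipC ipNl rmorphN (ipC x z). Qed.
Lemma ipBr x y z : ip z (x - y) = ip z x - ip z y.
Proof. by rewrite ipDr ipNr. Qed.

Lemma Re_ipC x y : complex.Re (ip y x) = complex.Re (ip x y).
Proof. by rewrite ipC ReJ'. Qed.

Lemma nr_lin (r : R) x y :
  nr (toC r *: x + y) = r ^+ 2 * nr x + 2 * r * complex.Re (ip x y) + nr y.
Proof.
rewrite /nr ipDl !ipDr !ipZl !ipZr conj_toC !ReD !ReM_real -/(nr x) -/(nr y).
rewrite (Re_ipC x y); lra.
Qed.

Lemma nrD x y : nr (x + y) = nr x + 2 * complex.Re (ip x y) + nr y.
Proof. by have := nr_lin 1 x y; rewrite rmorph1 scale1r => ->; lra. Qed.

Lemma nrN x : nr (- x) = nr x.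
Proof. by rewrite /nr ipNl ipNr opprK. Qed.

Lemma nrZ (r : R) x : nr (toC r *: x) = r ^+ 2 * nr x.
Proof. by have := nr_lin r x 0; rewrite addr0 ip0r /= => ->; rewrite /nr ip0l /=; lra. Qed.

Lemma nr_eq0 x : nr x = 0 -> x = 0.
Proof. by move=> h; apply: ip_eq0; rewrite ipxx h. Qed.

Lemma cross_le x y (s : R) : 0 < s ->
  s * (2 * complex.Re (ip x y)) <= s ^+ 2 * nr x + nr y.
Proof.
move=> s0; have := nr_ge0 (toC (- s) *: x + y); rewrite nr_lin.
rewrite sqrrN; lra.
Qed.

Lemma nrD_le2 x y : nr (x + y) <= 2 * nr x + 2 * nr y.
Proof.
have := cross_le x y 1 (ltr01 : (0:R) < 1); rewrite nrD expr1n; lra.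
Qed.

Lemma nrB_le2 x y : nr (x - y) <= 2 * nr x + 2 * nr y.
Proof. by have := nrD_le2 x (- y); rewrite nrN. Qed.


Lemma hnorm_lt x (s : R) : 0 < s -> (hnorm ip x < toC s) = (nr x < s ^+ 2).
Proof.
move=> s0; rewrite /hnorm ipxx.
have -> : toC s = sqrtC (toC s ^+ 2) by rewrite sqrCK // ler0c ltW.
have e : toC s ^+ 2 = toC (s ^+ 2) by rewrite rmorphXn.
rewrite ltr_sqrtC ?nnegrE ?ler0c ?nr_ge0 // e ?ltcR // ?ler0c ?exprn_ge0 // ?ltW //.
Qed.

Lemma posC (eps : C) : 0 < eps -> exists s : R, 0 < s /\ eps = toC s.
Proof.
case: eps => a b; rewrite ltcE /= => /andP [/eqP -> h].
by exists a.
Qed.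

Lemma conv_nr u l : converges_to ip u l ->
  forall e : R, 0 < e -> exists N, forall n, (N <= n)%N -> nr (u n - l) < e.
Proof.
move=> hc e e0.
have s0 : 0 < Num.sqrt e by rewrite sqrtr_gt0.
have := hc (toC (Num.sqrt e)); rewrite ltcR => /(_ s0) [N hN].
exists N => n /hN; rewrite hnorm_lt // sqr_sqrtr //; last exact: ltW.
Qed.

Lemma cauchy_of u :
  (forall e : R, 0 < e -> exists N, forall m n, (N <= m)%N -> (N <= n)%N ->
      nr (u m - u n) < e) -> cauchy_seq ip u.
Proof.
move=> h eps /posC [s [s0 ->]].
have [N hN] := h (s ^+ 2) (exprn_gt0 _ s0).
by exists N => m n hm hn; rewrite hnorm_lt //; apply: hN.
Qed.


Hypothesis ip_complete : forall u, cauchy_seq ip u -> exists l, converges_to ip u l.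

Definition ii : C := Complex 0 1.
Lemma Re_iM (w : C) : complex.Re (ii * w) = - complex.Im w.
Proof. by case: w => a b /=; rewrite !mul0r mul1r sub0r. Qed.

Lemma C_eq0 (w : C) : complex.Re w = 0 -> complex.Im w = 0 -> w = 0.
Proof. by case: w => a b /= -> ->. Qed.

Section Proj.
Variable K : V -> Prop.
Hypothesis K0 : K 0.
Hypothesis Klin : forall a x y, K x -> K y -> K (a *: x + y).
Hypothesis Kclosed : forall u l, (forall n, K (u n)) -> converges_to ip u l -> K l.

Lemma KZ a x : K x -> K (a *: x).
Proof. by move=> Kx; have := @Klin a x 0 Kx K0; rewrite addr0. Qed.

Lemma proj_exists phi : exists psi, K psi /\ forall chi, K chi -> ip (phi - psi) chi = 0.
Proof.
pose D : set R := fun r => exists k, K k /\ r = nr (phi - k).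
have D0 : D (nr (phi - 0)) by exists 0.
have Dlb : has_lbound D by exists 0 => r [k [_ ->]]; exact: nr_ge0.
set d := inf D.
have dle : forall k, K k -> d <= nr (phi - k).
  by move=> k Kk; apply: (ge_inf Dlb); exists k.
have d0 : 0 <= d.
  by apply: lb_le_inf; [exists (nr (phi - 0)) | move=> r [k [_ ->]]; exact: nr_ge0].
have seq : forall n, exists k, K k /\ nr (phi - k) < d + delta n.
  move=> n; have [e [k [Kk ->]] he] := inf_adherent (delta_gt0 R n) (conj (ex_intro _ _ D0) Dlb).
  by exists k.
have [ks hks] := choice seq.
have cb : forall m n, nr (ks m - ks n) <= 2 * delta m + 2 * delta n.
  move=> m n.
  have [Km hm] := hks m; have [Kn hn] := hks n.
  set x := phi - ks m; set y := phi - ks n.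
  set mid := toC (2^-1) *: ks m + toC (2^-1) *: ks n.
  have Kmid : K mid by apply: Klin => //; apply: KZ.
  have e1 : x + y = toC 2 *: (phi - mid).
    rewrite /x /y /mid scalerBr scalerDr !scalerA -rmorphM mulfV ?pnatr_eq0 //.
    rewrite rmorph1 !scale1r (_ : toC 2 = 2%:R) ?rmorph_nat // scaler_nat.
    by rewrite mulr2n opprD addrACA.
  have e2 : x - y = - (ks m - ks n) by rewrite /x /y opprB addrC addrA subrK opprB.
  have p1 := nrD x y; have p2 := nrD x (- y).
  rewrite ipNr ReN nrN e2 nrN in p2.
  rewrite e1 nrZ in p1.
  have := dle _ Kmid.
  lra.
have hcauchy : cauchy_seq ip ks.
  apply: cauchy_of => e e0.
  have e4 : 0 < e / 4 by lra.
  have [N hN] := delta_small _ _ e4.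
  exists N => m n hm hn.
  have := cb m n; have := delta_le R _ _ hm; have := delta_le R _ _ hn; lra.
have [k hk] := ip_complete _ hcauchy.
have Kk : K k := @Kclosed ks k (fun n => proj1 (hks n)) hk.
exists k; split => //.
set z := phi - k.
have hz : nr z <= d.
  apply/ler_addgt0Pr => e e0.
  pose eps := e / (d + e + 4).
  have den : 0 < d + e + 4 by lra.
  have eps0 : 0 < eps by rewrite divr_gt0.
  have heps : eps * (d + e + 4) = e by rewrite /eps divfK // lt0r_neq0.
  have eps1 : eps < 1 by rewrite /eps ltr_pdivrMr // mul1r; lra.
  have [N1 hN1] := delta_small _ _ eps0.
  have eps20 : 0 < eps ^+ 2 by rewrite exprn_gt0.
  have [N2 hN2] := @conv_nr ks k hk _ eps20.
  set n := maxn N1 N2.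
  have hy := hN2 n (leq_maxr N1 N2).
  have [_ hx] := hks n.
  have hdn := delta_le R _ _ (leq_maxl N1 N2); rewrite -/n in hdn.
  have ez : z = (phi - ks n) + (ks n - k) by rewrite addrA subrK.
  rewrite ez nrD.
  have hc := cross_le (phi - ks n) (ks n - k) _ eps0.
  have Y0 := nr_ge0 (ks n - k).
  move: hx hc hy Y0.
  set X := nr (phi - ks n). set Y := nr (ks n - k). set Q := complex.Re _.
  move=> hx hc hy Y0.
  have hX : X <= d + eps by lra.
  rewrite -(ler_pM2l eps0).
  have p1 : eps * (1 + eps) * X <= eps * (1 + eps) * (d + eps).
    by rewrite ler_wpM2l // mulr_ge0 //; lra.
  have p2 : (1 + eps) * Y <= (1 + eps) * eps ^+ 2.
    by rewrite ler_wpM2l //; lra.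
  have p3 : 0 <= eps ^+ 2 * (e + 2 - 2 * eps).
    by rewrite mulr_ge0 // ?sqr_ge0 //; lra.
  have p4 : eps * (eps * (d + e + 4)) = eps * e by rewrite heps.
  lra.
have key : forall c, K c -> complex.Re (ip c z) = 0.
  move=> c Kc.
  set a := complex.Re (ip c z); set b := nr c.
  have b0 : 0 <= b := nr_ge0 c.
  have b1 : 0 < b + 1 by lra.
  pose r := - a / (b + 1).
  have hr : r * (b + 1) = - a by rewrite /r divfK // lt0r_neq0.
  have Kk' : K (toC (- r) *: c + k) by apply: Klin.
  have := dle _ Kk'.
  have -> : phi - (toC (- r) *: c + k) = toC r *: c + z.
    by rewrite /z rmorphN scaleNr opprD opprK addrCA.
  rewrite nr_lin -/a -/b => h.
  have p1 : r * (r * (b + 1)) = r * (- a) by rewrite hr.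
  have p2 : 0 <= r ^+ 2 * b by rewrite mulr_ge0 // sqr_ge0.
  have r2 : r ^+ 2 <= 0 by lra.
  have : r ^+ 2 = 0 by apply/le_anti; rewrite r2 sqr_ge0.
  move/eqP; rewrite expf_eq0 /= => /eqP r0.
  by move: hr; rewrite r0 mul0r => /eqP; rewrite eq_sym oppr_eq0 => /eqP.
move=> chi Kchi.
have h1 := key _ Kchi.
have h2 := key _ (@KZ ii chi Kchi).
rewrite ipZl Re_iM in h2.
have -> : ip z chi = (ip chi z)^* by rewrite ipC.
rewrite (@C_eq0 _ h1) ?rmorph0 //; lra.
Qed.


Lemma spec_unique phi p1 p2 : K p1 -> K p2 ->
  (forall chi, K chi -> ip (phi - p1) chi = 0) ->
  (forall chi, K chi -> ip (phi - p2) chi = 0) -> p1 = p2.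
Proof.
move=> K1 K2 h1 h2.
have Kc : K (p1 - p2) by rewrite addrC -scaleN1r; apply: Klin.
apply/eqP; rewrite -subr_eq0; apply/eqP; apply: ip_eq0.
have eq : (phi - p2) - (phi - p1) = p1 - p2 by rewrite opprB addrC addrA subrK.
rewrite -{1}eq.
by rewrite ipBl h1 // h2 // subrr.
Qed.

Lemma orthproj_spec phi : K (orthproj ip K phi) /\
  forall chi, K chi -> ip (phi - orthproj ip K phi) chi = 0.
Proof.
exact: (epsilon_spec (inhabits 0) (fun psi => K psi /\ forall chi, K chi -> ip (phi - psi) chi = 0) (proj_exists phi)).
Qed.

Lemma orthproj_eq phi psi : K psi ->
  (forall chi, K chi -> ip (phi - psi) chi = 0) -> orthproj ip K phi = psi.
Proof.
move=> Kp hp; have [K1 h1] := orthproj_spec phi.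
exact: (@spec_unique phi _ _ K1 Kp h1 hp).
Qed.

End Proj.

Lemma Re0 : complex.Re (0 : C) = 0. Proof. by []. Qed.

Lemma lin_sub (T : V -> V) : linear_op T -> forall x y, T (x - y) = T x - T y.
Proof.
move=> HT x y; have h := HT (-1) y x.
by rewrite scaleN1r addrC in h; rewrite h scaleN1r addrC.
Qed.

Lemma lin0 (T : V -> V) : linear_op T -> T 0 = 0.
Proof. by move=> HT; have := @lin_sub T HT 0 0; rewrite !subrr. Qed.

Lemma closed_eq (T1 T2 : V -> V) :
  (forall x y, T1 (x - y) = T1 x - T1 y) -> (forall x y, T2 (x - y) = T2 x - T2 y) ->
  (forall x, nr (T1 x) <= nr x) -> (forall x, nr (T2 x) <= nr x) ->
  forall u l, (forall n, T1 (u n) = T2 (u n)) -> converges_to ip u l -> T1 l = T2 l.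
Proof.
move=> h1 h2 c1 c2 u l hu hc.
apply/eqP; rewrite -subr_eq0; apply/eqP; apply: nr_eq0.
apply/le_anti; rewrite nr_ge0 andbT; apply/ler_addgt0Pr => e e0.
have e4 : 0 < e / 4 by lra.
have [N hN] := @conv_nr u l hc _ e4.
have hw := hN N (leqnn N).
have -> : T1 l - T2 l = T1 (l - u N) - T2 (l - u N).
  by rewrite h1 h2 hu opprB addrA subrK.
have := nrB_le2 (T1 (l - u N)) (T2 (l - u N)).
have := c1 (l - u N); have := c2 (l - u N).
have -> : nr (l - u N) = nr (u N - l) by rewrite -nrN opprB.
lra.
Qed.

Lemma proj_contr (q : V -> V) : is_projection ip q -> forall x, nr (q x) <= nr x.
Proof.
case=> [[HL _] sa idem] x.
have e : x = q x + (x - q x) by rewrite addrC subrK.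
rewrite [X in _ <= nr X]e nrD.
have -> : ip (q x) (x - q x) = 0 by rewrite sa (@lin_sub q HL) idem subrr ip0r.
rewrite Re0; have := nr_ge0 (x - q x); lra.
Qed.

Section Main.
Variable S : Type.
Variable Gamma : S -> Type.
Variable p : forall t : S, Gamma t -> V -> V.
Hypothesis Hproj : forall t (a : Gamma t), is_projection ip (p t a).

Lemma p_lin t a : linear_op (p t a).
Proof. by case: (Hproj t a) => [[]]. Qed.

Lemma wp_app w u x : word_prod p (app w u) x = word_prod p w (word_prod p u x).
Proof. by elim: w => [|i w IH] //=; rewrite IH. Qed.

Lemma wp_lin w : linear_op (word_prod p w).
Proof.
elim: w => [|i w IH] a x y //=.
by rewrite IH (@p_lin _ (projT2 i)).
Qed.

Lemma wp_contr w x : nr (word_prod p w x) <= nr x.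
Proof.
elim: w => [|i w IH] //=.
exact: le_trans (@proj_contr _ (@Hproj _ (projT2 i)) _) IH.
Qed.

Lemma Hpi0 : commutes_on p 0.
Proof. by move=> w v _; rewrite (@lin0 _ (wp_lin w)) (@lin0 _ (wp_lin v)). Qed.

Lemma Hpilin a x y : commutes_on p x -> commutes_on p y -> commutes_on p (a *: x + y).
Proof.
move=> hx hy w v hwv.
have Lw := wp_lin w; have Lv := wp_lin v; rewrite /linear_op in Lw Lv.
by rewrite Lw Lv (hx w v hwv) (hy w v hwv).
Qed.

Lemma Hpiclosed u l : (forall n, commutes_on p (u n)) -> converges_to ip u l ->
  commutes_on p l.
Proof.
move=> hu hc w v hwv.
exact: (@closed_eq (word_prod p w) (word_prod p v) (@lin_sub _ (wp_lin w))
  (@lin_sub _ (wp_lin v)) (wp_contr w) (wp_contr v) u l (fun n => hu n w v hwv) hc).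
Qed.

Lemma Hpi_inv t a y : commutes_on p y -> commutes_on p (p t a y).
Proof.
move=> hy w v hwv.
have := hy (app w (existT _ t a :: nil)) (app v (existT _ t a :: nil))
  (Permutation_app_tail _ hwv).
by rewrite !wp_app.
Qed.

Lemma in_map_ex (f : S -> V -> V) (ts : list S) q :
  In q (map f ts) -> exists t, q = f t.
Proof.
elim: ts => [|t ts IH] //= [<-|/IH //]; by exists t.
Qed.

Lemma main (A : Omega Gamma -> Prop) phi :
  F_set ip p A phi -> F_set ip p A (phi_pi ip p phi).
Proof.
set P := phi_pi ip p.
have HP x : commutes_on p (P x) :=
  proj1 (@orthproj_spec (commutes_on p) Hpi0 Hpilin Hpiclosed x).
have HPo x h : commutes_on p h -> ip (x - P x) h = 0 :=
  proj2 (@orthproj_spec (commutes_on p) Hpi0 Hpilin Hpiclosed x) h.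
have comm t a x : P (p t a x) = p t a (P x).
  apply: (@orthproj_eq (commutes_on p) Hpi0 Hpilin Hpiclosed).
    exact: Hpi_inv (HP x).
  move=> h hh; have [_ sa _] := Hproj t a.
  rewrite -(@lin_sub _ (p_lin t a)) sa.
  exact: HPo _ _ (@Hpi_inv t a h hh).
move=> hF omega hA.
have [ts [hts hm]] := hF omega hA.
exists ts; split => //.
set qs := map _ ts in hm *.
pose M := fun y => forall q, In q qs -> Defs.range q y.
have inq q : In q qs -> exists t, q = p t (omega t) by move/in_map_ex.
have rangeP q y : In q qs -> Defs.range q y <-> q y = y.
  move=> /inq [t ->]; have [_ _ idem] := Hproj t (omega t).
  by split; [case=> x <-; rewrite idem | move=> h; exists y].
have M0 : M 0.
  by move=> q hq; apply/(rangeP _ _ hq); have [t ->] := inq q hq; rewrite (@lin0 _ (p_lin _ _)).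
have Mlin a x y : M x -> M y -> M (a *: x + y).
  move=> hx hy q hq; apply/(rangeP _ _ hq).
  have hx' := (rangeP _ _ hq).1 (hx q hq); have hy' := (rangeP _ _ hq).1 (hy q hq).
  have [t eq] := inq q hq; rewrite eq in hx' hy' *.
  by rewrite (p_lin t (omega t)) hx' hy'.
have Mclosed u l : (forall n, M (u n)) -> converges_to ip u l -> M l.
  move=> hu hc q hq; apply/(rangeP _ _ hq).
  have [t eq] := inq q hq.
  have hu' n : q (u n) = u n := (rangeP _ _ hq).1 (hu n q hq).
  rewrite eq in hu' *.
  apply: (@closed_eq (p t (omega t)) id (@lin_sub _ (p_lin t (omega t))) (fun x y => erefl)
     (@proj_contr _ (Hproj t (omega t))) (fun x => le_refl _) u l hu' hc).
have [_ hspec] := @orthproj_spec M M0 Mlin Mclosed phi.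
change (orthproj ip M phi = 0) in hm.
rewrite hm subr0 in hspec.
change (orthproj ip M (P phi) = 0).
apply: (@orthproj_eq M M0 Mlin Mclosed _ 0 M0) => chi Mchi.
rewrite subr0.
have MP : M (P chi).
  move=> q hq; apply/(rangeP _ _ hq).
  have hc := (rangeP _ _ hq).1 (Mchi q hq).
  have [t eq] := inq q hq; rewrite eq in hc *.
  by rewrite -comm hc.
have e1 : ip (P phi) chi = ip (P phi) (P chi) + ip (P phi) (chi - P chi).
  by rewrite -ipDr addrC subrK.
have e2 : ip (P phi) (chi - P chi) = 0.
  by rewrite ipC (HPo _ _ (HP phi)) rmorph0.
have e3 : ip (P phi) (P chi) = ip phi (P chi) - ip (phi - P phi) (P chi).
  by rewrite ipBl opprB addrC subrK.
by rewrite e1 e2 e3 (HPo _ _ (HP chi)) (hspec _ MP) subrr addr0.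
Qed.

End Main.
End Basics.

Theorem lemma1 (R : realType) (V : lmodType R[i]) (ip : V -> V -> R[i])
  (Hhil : is_hilbert ip)
  (S : Type) (Gamma : S -> Type) (p : forall t : S, Gamma t -> V -> V)
  (Hcount : forall t, countable_type (Gamma t))
  (Hproj : forall t (a : Gamma t), is_projection ip (p t a))
  (Hsum : forall t, sums_to_identity ip p t)
  (A : Omega Gamma -> Prop) (phi : V) :
  F_set ip p A phi -> F_set ip p A (phi_pi ip p phi).
Proof.
case: Hhil => ipC ipL ip_ge0 ip_eq0 ipcomp.
exact: (@main R V ip ipC ipL ip_ge0 ip_eq0 ipcomp S Gamma p Hproj A phi).
Qed.
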